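(* Let $H$ be a separable infinite-dimensional Hilbert space, let $\{u_t\}_{t\in\mathbb{R}}$ be a one-parameter group of unitaries in $B(H)$, and let $\{\alpha_t\}_{t\in\mathbb{R}}$ be the group of automorphisms of $B(H)$ given by $\alpha_t(A)=u_tAu_t^*$. Then $\{u_t\}_{t\in\mathbb{R}}$ is UEC as a family of maps $H_1\to H_1$ if and only if $\{\alpha_t\}_{t\in\mathbb{R}}$ is UEC as a family of maps $B_1\to B_1$.
   Context: $H_1$ is the closed unit ball of $H$ and $B_1$ the closed unit ball of $B(H)$. $H_1$ carries the (weak) uniformity whose basic entourages are the sets $\{(x,y)\in H_1\times H_1: |\langle x-y,z_i\rangle|<\epsilon,\ i=1,\dots,N\}$ with $z_i\in H_1$, $N\in\mathbb{N}$, $\epsilon>0$; $B_1$ carries the (weak operator) uniformity whose basic entourages are the sets $\{(A,B)\in B_1\times B_1: |\langle (A-B)w_i,z_i\rangle|<\epsilon,\ i=1,\dots,N\}$ with $w_i,z_i\in H_1$, $N\in\mathbb{N}$, $\epsilon>0$ (for separable $H$ these are the uniformities of the metrizable weak, resp. weak operator, topologies on these compact balls). A family $\mathcal{F}$ of maps from a uniform space $X$ to itself is uniformly equicontinuous (UEC) if for every entourage $U$ there is an entourage $W$ such that $(x,y)\in W$ implies $(f(x),f(y))\in U$ for all $f\in\mathcal{F}$. *)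

(* Defs.v *)
From Stdlib Require Import Reals.
Open Scope R_scope.

Record Cplx := mkC { Re : R; Im : R }.

Definition C0 : Cplx := mkC 0 0.
Definition C1 : Cplx := mkC 1 0.
Definition Cadd (a b : Cplx) : Cplx := mkC (Re a + Re b) (Im a + Im b).
Definition Cmul (a b : Cplx) : Cplx :=
  mkC (Re a * Re b - Im a * Im b) (Re a * Im b + Im a * Re b).
Definition Cconj (a : Cplx) : Cplx := mkC (Re a) (- Im a).
Definition Cmod (a : Cplx) : R := sqrt (Re a * Re a + Im a * Im a).

(* ---------- Complex Hilbert spaces ----------
   Inner product: linear in the first argument, conjugate-linear in the second. *)
Record HilbertSpace := {
  hV :> Type;
  hadd : hV -> hV -> hV;
  hzero : hV;
  hopp : hV -> hV;
  hscal : Cplx -> hV -> hV;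
  hinner : hV -> hV -> Cplx;
  hadd_assoc : forall x y z, hadd x (hadd y z) = hadd (hadd x y) z;
  hadd_comm : forall x y, hadd x y = hadd y x;
  hadd_zero : forall x, hadd x hzero = x;
  hadd_opp : forall x, hadd x (hopp x) = hzero;
  hscal_one : forall x, hscal C1 x = x;
  hscal_assoc : forall a b x, hscal a (hscal b x) = hscal (Cmul a b) x;
  hscal_addv : forall a x y, hscal a (hadd x y) = hadd (hscal a x) (hscal a y);
  hscal_adds : forall a b x, hscal (Cadd a b) x = hadd (hscal a x) (hscal b x);
  hinner_addl : forall x y z, hinner (hadd x y) z = Cadd (hinner x z) (hinner y z);
  hinner_scall : forall a x y, hinner (hscal a x) y = Cmul a (hinner x y);
  hinner_conj : forall x y, hinner y x = Cconj (hinner x y);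
  hinner_pos : forall x, 0 <= Re (hinner x x);
  hinner_def : forall x, hinner x x = C0 -> x = hzero;
  hcomplete : forall s : nat -> hV,
    (forall eps, 0 < eps -> exists N, forall m n, (N <= m)%nat -> (N <= n)%nat ->
       sqrt (Re (hinner (hadd (s m) (hopp (s n))) (hadd (s m) (hopp (s n))))) < eps) ->
    exists l, forall eps, 0 < eps -> exists N, forall n, (N <= n)%nat ->
       sqrt (Re (hinner (hadd (s n) (hopp l)) (hadd (s n) (hopp l)))) < eps
}.

Section HS.
Variable H : HilbertSpace.

Definition hsub (x y : H) : H := hadd H x (hopp H y).
Definition hnorm (x : H) : R := sqrt (Re (hinner H x x)).

Fixpoint lincomb (n : nat) (c : nat -> Cplx) (f : nat -> H) : H :=
  match n with
  | O => hzero H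
  | S k => hadd H (lincomb k c f) (hscal H (c k) (f k))
  end.

Definition separable : Prop :=
  exists e : nat -> H, forall x eps, 0 < eps -> exists n, hnorm (hsub x (e n)) < eps.

Definition infinite_dimensional : Prop :=
  forall n : nat, exists f : nat -> H,
    forall c : nat -> Cplx, lincomb n c f = hzero H ->
      forall i, (i < n)%nat -> c i = C0.

Definition linear_op (T : H -> H) : Prop :=
  (forall x y, T (hadd H x y) = hadd H (T x) (T y)) /\
  (forall a x, T (hscal H a x) = hscal H a (T x)).

Definition bounded_op (T : H -> H) : Prop :=
  linear_op T /\ exists M, forall x, hnorm (T x) <= M * hnorm x.

Definition is_adjoint (T S : H -> H) : Prop :=
  forall x y, hinner H (T x) y = hinner H x (S y).

Definition unitary (U : H -> H) : Prop :=
  bounded_op U /\ exists S, is_adjoint U S /\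
    (forall x, S (U x) = x) /\ (forall x, U (S x) = x).

Definition one_param_unitary_group (u : R -> H -> H) : Prop :=
  (forall t, unitary (u t)) /\
  (forall x, u 0 x = x) /\
  (forall s t x, u (s + t) x = u s (u t x)) /\
  (forall x t0 eps, 0 < eps -> exists d, 0 < d /\
     forall t, Rabs (t - t0) < d -> hnorm (hsub (u t x) (u t0 x)) < eps).

Definition in_H1 (x : H) : Prop := hnorm x <= 1.
Definition in_B1 (A : H -> H) : Prop :=
  linear_op A /\ forall x, hnorm (A x) <= hnorm x.

Definition weak_ent (N : nat) (z : nat -> H) (eps : R) (x y : H) : Prop :=
  forall i, (i < N)%nat -> Cmod (hinner H (hsub x y) (z i)) < eps.

Definition wot_ent (N : nat) (w z : nat -> H) (eps : R) (A B : H -> H) : Prop :=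
  forall i, (i < N)%nat ->
    Cmod (hinner H (hsub (A (w i)) (B (w i))) (z i)) < eps.

Definition UEC_H1 (u : R -> H -> H) : Prop :=
  forall N (z : nat -> H) eps,
    (forall i, (i < N)%nat -> in_H1 (z i)) -> 0 < eps ->
    exists M (w : nat -> H) del,
      (forall i, (i < M)%nat -> in_H1 (w i)) /\ 0 < del /\
      forall x y, in_H1 x -> in_H1 y -> weak_ent M w del x y ->
        forall t, weak_ent N z eps (u t x) (u t y).

Definition UEC_B1 (alpha : R -> (H -> H) -> (H -> H)) : Prop :=
  forall N (w z : nat -> H) eps,
    (forall i, (i < N)%nat -> in_H1 (w i) /\ in_H1 (z i)) -> 0 < eps ->
    exists M (w' z' : nat -> H) del,
      (forall i, (i < M)%nat -> in_H1 (w' i) /\ in_H1 (z' i)) /\ 0 < del /\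
      forall A B, in_B1 A -> in_B1 B -> wot_ent M w' z' del A B ->
        forall t, wot_ent N w z eps (alpha t A) (alpha t B).

End HS.

(* Main.v *)
Require Import Defs.
From Stdlib Require Import Reals Lra Lia Psatz.
Open Scope R_scope.


Lemma Cext (a b : Cplx) : Re a = Re b -> Im a = Im b -> a = b.
Proof. destruct a, b; simpl; intros; subst; reflexivity. Qed.

Definition Copp (a : Cplx) : Cplx := mkC (- Re a) (- Im a).

Lemma Cmod_nonneg a : 0 <= Cmod a.
Proof. apply sqrt_pos. Qed.

Lemma Cmod_sq a : Cmod a * Cmod a = Re a * Re a + Im a * Im a.
Proof. unfold Cmod. apply sqrt_sqrt. nra. Qed.

Lemma Cmod_C0 : Cmod C0 = 0.
Proof. unfold Cmod, C0; simpl. replace (0*0+0*0) with 0 by ring. apply sqrt_0. Qed.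

Lemma Re_le_Cmod a : Re a <= Cmod a.
Proof.
  destruct (Rle_or_lt (Re a) (Cmod a)); auto.
  pose proof (Cmod_sq a); pose proof (Cmod_nonneg a). nra.
Qed.

Lemma Cmod_le_sq a b : 0 <= b -> Re a * Re a + Im a * Im a <= b * b -> Cmod a <= b.
Proof.
  intros Hb H. destruct (Rle_or_lt (Cmod a) b) as [|Hl]; auto.
  pose proof (Cmod_sq a). pose proof (Cmod_nonneg a). nra.
Qed.

Lemma Cmod_add a b : Cmod (Cadd a b) <= Cmod a + Cmod b.
Proof.
  apply Cmod_le_sq. pose proof (Cmod_nonneg a); pose proof (Cmod_nonneg b); lra.
  unfold Cadd; simpl.
  pose proof (Cmod_sq a); pose proof (Cmod_sq b).
  pose proof (Cmod_nonneg a); pose proof (Cmod_nonneg b).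
  assert (Re a * Re b + Im a * Im b <= Cmod a * Cmod b).
  { destruct (Rle_or_lt (Re a * Re b + Im a * Im b) 0). nra.
    destruct (Rle_or_lt (Re a * Re b + Im a * Im b) (Cmod a * Cmod b)); auto.
    assert ((Re a * Re b + Im a * Im b)*(Re a * Re b + Im a * Im b) <= (Cmod a * Cmod a) * (Cmod b * Cmod b)).
    { rewrite H, H0. pose proof (Rle_0_sqr (Re a * Im b - Im a * Re b)). unfold Rsqr in *. nra. }
    assert (0 <= Cmod a * Cmod b) by nra. nra. }
  nra.
Qed.

Lemma Cmod_mul a b : Cmod (Cmul a b) = Cmod a * Cmod b.
Proof.
  unfold Cmod, Cmul; simpl. rewrite <- sqrt_mult by nra. f_equal. ring.
Qed.

Lemma Cmod_conj a : Cmod (Cconj a) = Cmod a.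
Proof. unfold Cmod, Cconj; simpl. f_equal. ring. Qed.

Lemma Cmod_opp a : Cmod (Copp a) = Cmod a.
Proof. unfold Cmod, Copp; simpl. f_equal. ring. Qed.

Lemma Cmod_sub a b : Cmod (Cadd a (Copp b)) <= Cmod a + Cmod b.
Proof. rewrite <- (Cmod_opp b). apply Cmod_add. Qed.

Fixpoint csum (n : nat) (f : nat -> Cplx) : Cplx :=
  match n with O => C0 | S k => Cadd (csum k f) (f k) end.

Lemma csum_bound n f B : (forall k, (k < n)%nat -> Cmod (f k) <= B) ->
  Cmod (csum n f) <= INR n * B.
Proof.
  induction n; intros Hf; cbn [csum].
  - rewrite Cmod_C0; simpl; lra.
  - eapply Rle_trans. apply Cmod_add.
    rewrite S_INR. assert (Cmod (f n) <= B) by (apply Hf; lia).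
    assert (Cmod (csum n f) <= INR n * B) by (apply IHn; intros; apply Hf; lia). lra.
Qed.

Lemma csum_ext n f g : (forall k, (k < n)%nat -> f k = g k) -> csum n f = csum n g.
Proof. induction n; simpl; intros; auto. rewrite IHn by (intros; apply H; lia). rewrite H by lia. auto. Qed.

Lemma csum_single n f j : (j < n)%nat -> (forall k, (k < n)%nat -> k <> j -> f k = C0) ->
  csum n f = f j.
Proof.
  induction n; intros Hj Hf. lia. simpl.
  destruct (Nat.eq_dec j n).
  - subst. assert (csum n f = C0).
    { clear IHn Hj. assert (forall k, (k < n)%nat -> f k = C0) by (intros; apply Hf; lia).
      clear Hf. induction n; simpl; auto. rewrite IHn by (intros; apply H; lia). rewrite H by lia.
      apply Cext; simpl; lra. }
    rewrite H. apply Cext; simpl; lra.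
  - rewrite IHn by (try lia; intros; apply Hf; lia). rewrite (Hf n) by lia. apply Cext; simpl; lra.
Qed.

Lemma csum_zero n f : (forall k, (k < n)%nat -> f k = C0) -> csum n f = C0.
Proof. induction n; simpl; intros; auto. rewrite IHn by (intros; apply H; lia). rewrite H by lia. apply Cext; simpl; lra. Qed.


Section V.
Context {H : HilbertSpace}.
Implicit Types x y z : H.

Lemma hadd_0l x : hadd H (hzero H) x = x.
Proof. rewrite hadd_comm. apply hadd_zero. Qed.

Lemma hadd_cancel x y : hadd H x y = x -> y = hzero H.
Proof.
  intros E.
  transitivity (hadd H y (hadd H x (hopp H x))). rewrite hadd_opp, hadd_zero; auto.
  rewrite hadd_assoc, (hadd_comm H y x), E. apply hadd_opp.
Qed.

Lemma hsub_eq x y : hsub H x y = hzero H -> x = y.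
Proof.
  unfold hsub; intros E.
  transitivity (hadd H x (hadd H (hopp H y) y)). rewrite (hadd_comm H (hopp H y)), hadd_opp, hadd_zero; auto.
  rewrite hadd_assoc, E. apply hadd_0l.
Qed.

Lemma hadd_sub x y : hadd H y (hsub H x y) = x.
Proof.
  unfold hsub. rewrite (hadd_comm H x), hadd_assoc, hadd_opp. apply hadd_0l.
Qed.

Lemma hscal_0v a : hscal H a (hzero H) = hzero H.
Proof.
  apply (hadd_cancel (hscal H a (hzero H))).
  rewrite <- hscal_addv, hadd_zero. reflexivity.
Qed.

Lemma inner_0l y : hinner H (hzero H) y = C0.
Proof.
  pose proof (hinner_addl H (hzero H) (hzero H) y) as E.
  rewrite hadd_zero in E.
  destruct (hinner H (hzero H) y) as [a b]. unfold Cadd in E. simpl in E.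
  injection E; intros. apply Cext; simpl; lra.
Qed.

Lemma inner_oppl x y : hinner H (hopp H x) y = Copp (hinner H x y).
Proof.
  pose proof (hinner_addl H x (hopp H x) y) as E.
  rewrite hadd_opp, inner_0l in E.
  apply Cext; unfold Copp; simpl.
  - apply (f_equal Re) in E. simpl in E. lra.
  - apply (f_equal Im) in E. simpl in E. lra.
Qed.

Lemma inner_subl x y z : hinner H (hsub H x y) z = Cadd (hinner H x z) (Copp (hinner H y z)).
Proof. unfold hsub. rewrite hinner_addl, inner_oppl. reflexivity. Qed.

Lemma inner_addr x y z : hinner H x (hadd H y z) = Cadd (hinner H x y) (hinner H x z).
Proof.
  rewrite hinner_conj, hinner_addl, (hinner_conj H y x), (hinner_conj H z x).
  apply Cext; simpl; ring.
Qed.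

Lemma inner_scalr a x y : hinner H x (hscal H a y) = Cmul (Cconj a) (hinner H x y).
Proof.
  rewrite hinner_conj, hinner_scall, (hinner_conj H y x).
  apply Cext; simpl; ring.
Qed.

Lemma inner_0r x : hinner H x (hzero H) = C0.
Proof. rewrite hinner_conj, inner_0l. apply Cext; simpl; ring. Qed.

Lemma inner_oppr x y : hinner H x (hopp H y) = Copp (hinner H x y).
Proof. rewrite hinner_conj, inner_oppl, (hinner_conj H y x). apply Cext; simpl; ring. Qed.

Lemma inner_subr x y z : hinner H x (hsub H y z) = Cadd (hinner H x y) (Copp (hinner H x z)).
Proof. unfold hsub. rewrite inner_addr, inner_oppr. reflexivity. Qed.

Lemma inner_sub0 x y : hinner H (hsub H x (hzero H)) y = hinner H x y.
Proof. rewrite inner_subl, inner_0l. apply Cext; simpl; ring. Qed.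

Lemma Im_self x : Im (hinner H x x) = 0.
Proof. pose proof (f_equal Im (hinner_conj H x x)). simpl in H0. lra. Qed.

Definition nsq x := Re (hinner H x x).

Lemma nsq_pos x : 0 <= nsq x.
Proof. apply hinner_pos. Qed.

Lemma hnorm_sq x : hnorm H x * hnorm H x = nsq x.
Proof. unfold hnorm. apply sqrt_sqrt. apply nsq_pos. Qed.

Lemma hnorm_pos x : 0 <= hnorm H x.
Proof. apply sqrt_pos. Qed.

Lemma nsq0 x : nsq x = 0 -> x = hzero H.
Proof.
  intros E. apply hinner_def. apply Cext; simpl. apply E. apply Im_self.
Qed.

Lemma nsq_zero : nsq (hzero H) = 0.
Proof. unfold nsq. rewrite inner_0l. reflexivity. Qed.

Lemma hnorm_zero : hnorm H (hzero H) = 0.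
Proof. unfold hnorm. fold (nsq (hzero H)). rewrite nsq_zero. apply sqrt_0. Qed.

Lemma H1_le x : in_H1 H x <-> nsq x <= 1.
Proof.
  unfold in_H1, hnorm; fold (nsq x). split; intros.
  - pose proof (nsq_pos x). destruct (Rle_or_lt (nsq x) 1); auto.
    assert (0 <= 1 < nsq x) by lra. apply sqrt_lt_1_alt in H3. rewrite sqrt_1 in H3. lra.
  - rewrite <- sqrt_1. apply sqrt_le_1_alt. auto.
Qed.

Lemma in_H1_zero : in_H1 H (hzero H).
Proof. apply H1_le. rewrite nsq_zero. lra. Qed.

Lemma lincomb_ext n c c' (f f' : nat -> H) :
  (forall k, (k < n)%nat -> c k = c' k /\ f k = f' k) -> lincomb H n c f = lincomb H n c' f'.
Proof.
  induction n; simpl; intros; auto.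
  rewrite IHn by (intros; apply H0; lia). destruct (H0 n) as [-> ->]; auto.
Qed.

Lemma inner_lincombl n c f y :
  hinner H (lincomb H n c f) y = csum n (fun k => Cmul (c k) (hinner H (f k) y)).
Proof.
  induction n; simpl. apply inner_0l.
  rewrite hinner_addl, hinner_scall, IHn. reflexivity.
Qed.

Lemma inner_lincombr n c f y :
  hinner H y (lincomb H n c f) = csum n (fun k => Cmul (Cconj (c k)) (hinner H y (f k))).
Proof.
  induction n; simpl. apply inner_0r.
  rewrite inner_addr, inner_scalr, IHn. reflexivity.
Qed.

Lemma linear_zero (A : H -> H) : linear_op H A -> A (hzero H) = hzero H.
Proof.
  intros [Ha _]. apply (hadd_cancel (A (hzero H))). rewrite <- Ha, hadd_zero. auto.
Qed.

Lemma linear_lincomb (A : H -> H) n c f : linear_op H A ->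
  A (lincomb H n c f) = lincomb H n c (fun k => A (f k)).
Proof.
  intros HA. induction n; simpl. apply linear_zero; auto.
  destruct HA as [Ha Hs]. rewrite Ha, Hs, IHn. auto.
Qed.

Lemma nsq_scal a x : nsq (hscal H a x) = (Re a * Re a + Im a * Im a) * nsq x.
Proof.
  unfold nsq. rewrite hinner_scall, inner_scalr. pose proof (Im_self x).
  simpl. rewrite H0. ring.
Qed.

Lemma hnorm_scal a x : hnorm H (hscal H a x) = Cmod a * hnorm H x.
Proof.
  unfold hnorm. fold (nsq (hscal H a x)). fold (nsq x). rewrite nsq_scal.
  unfold Cmod. apply sqrt_mult. nra. apply nsq_pos.
Qed.

Lemma inner_add_add x y z w :
  hinner H (hadd H x y) (hadd H z w) =
  Cadd (Cadd (hinner H x z) (hinner H x w)) (Cadd (hinner H y z) (hinner H y w)).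
Proof. rewrite !hinner_addl, !inner_addr. reflexivity. Qed.

Lemma CS x y : Cmod (hinner H x y) <= hnorm H x * hnorm H y.
Proof.
  destruct (Req_dec (nsq y) 0) as [E|Hb].
  - apply nsq0 in E. subst. rewrite inner_0r, Cmod_C0, hnorm_zero. lra.
  - pose proof (nsq_pos y) as Hb0.
    set (b := nsq y) in *. set (p := hinner H x y).
    pose proof (nsq_pos (hadd H (hscal H (mkC b 0) x) (hscal H (Copp p) y))) as P.
    unfold nsq at 1 in P. rewrite inner_add_add, !hinner_scall, !inner_scalr in P.
    rewrite (hinner_conj H x y) in P. fold p in P.
    pose proof (Im_self x). pose proof (Im_self y).
    assert (Ey : hinner H y y = mkC b 0) by (apply Cext; simpl; auto).
    assert (Ex : hinner H x x = mkC (nsq x) 0) by (apply Cext; simpl; auto).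
    rewrite Ey, Ex in P. destruct p as [p1 p2]. unfold Copp, Cconj, Cadd, Cmul in P. simpl in P.
    pose proof (nsq_pos x).
    assert (Q : p1 * p1 + p2 * p2 <= b * nsq x).
    { assert (b * (b * nsq x - (p1*p1+p2*p2)) >= 0) by nra.
      assert (0 < b) by lra.
      destruct (Rle_or_lt (p1 * p1 + p2 * p2) (b * nsq x)); auto. nra. }
    apply Cmod_le_sq. apply Rmult_le_pos; apply hnorm_pos.
    simpl. replace (hnorm H x * hnorm H y * (hnorm H x * hnorm H y)) with
      ((hnorm H x * hnorm H x) * (hnorm H y * hnorm H y)) by ring.
    rewrite !hnorm_sq. fold b. nra.
Qed.

End V.


Section G.
Context {H : HilbertSpace}.
Implicit Types x y z : H.

Lemma conj0 c : c = C0 -> Cconj c = C0.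
Proof. intros ->. apply Cext; simpl; ring. Qed.

Lemma inner_sym0 x y : hinner H x y = C0 -> hinner H y x = C0.
Proof. intros E. rewrite hinner_conj, E. apply conj0; auto. Qed.

Definition normalize x : H :=
  if Req_EM_T (hnorm H x) 0 then hzero H else hscal H (mkC (/ hnorm H x) 0) x.

Lemma normalize_cases x : normalize x = hzero H \/ hinner H (normalize x) (normalize x) = Defs.C1.
Proof.
  unfold normalize. destruct (Req_EM_T (hnorm H x) 0) as [E|E]; auto.
  right. apply Cext.
  - fold (nsq (hscal H (mkC (/ hnorm H x) 0) x)). rewrite nsq_scal. simpl.
    rewrite <- hnorm_sq. field. auto.
  - apply Im_self.
Qed.

Lemma normalize_orth x y : hinner H x y = C0 -> hinner H (normalize x) y = C0.
Proof.
  intros E. unfold normalize. destruct (Req_EM_T (hnorm H x) 0).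
  apply inner_0l. rewrite hinner_scall, E. apply Cext; simpl; ring.
Qed.

Lemma normalize_recon x : x = hscal H (mkC (hnorm H x) 0) (normalize x).
Proof.
  unfold normalize. destruct (Req_EM_T (hnorm H x) 0) as [E|E].
  - rewrite hscal_0v. apply nsq0. rewrite <- hnorm_sq, E. ring.
  - rewrite hscal_assoc. replace (Cmul _ _) with Defs.C1. symmetry; apply hscal_one.
    apply Cext; simpl; field; auto.
Qed.

Definition proj (e : nat -> H) n a := lincomb H n (fun k => hinner H a (e k)) e.

Fixpoint gsf (v : nat -> H) (n : nat) : nat -> H :=
  match n with
  | O => fun _ => hzero H
  | S m => fun k => if Nat.ltb k m then gsf v m k
           else normalize (hsub H (v m) (proj (gsf v m) m (v m)))
  end.

Definition gse v k := gsf v (S k) k.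

Lemma gsf_stable v n k : (k < n)%nat -> gsf v n k = gse v k.
Proof.
  induction n; intros Hk. lia.
  simpl. destruct (Nat.ltb_spec k n). apply IHn; auto.
  assert (k = n) by lia. subst. unfold gse. simpl. rewrite Nat.ltb_irrefl. auto.
Qed.

Lemma gse_def v m : gse v m = normalize (hsub H (v m) (proj (gse v) m (v m))).
Proof.
  unfold gse at 1. simpl. rewrite Nat.ltb_irrefl. unfold proj.
  rewrite (lincomb_ext m _ (fun k => hinner H (v m) (gse v k)) _ (gse v)); auto.
  intros. rewrite gsf_stable; auto.
Qed.

Definition ON (e : nat -> H) n :=
  (forall j k, (j < k)%nat -> (k < n)%nat -> hinner H (e k) (e j) = C0) /\
  (forall k, (k < n)%nat -> e k = hzero H \/ hinner H (e k) (e k) = Defs.C1).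

Lemma ON_pair e n j k : ON e n -> (j < n)%nat -> (k < n)%nat -> j <> k -> hinner H (e k) (e j) = C0.
Proof.
  intros [O1 _] Hj Hk D. destruct (Nat.lt_ge_cases j k). apply O1; auto.
  apply inner_sym0. apply O1; auto. lia.
Qed.

Lemma proj_orth e n a j : ON e n -> (j < n)%nat ->
  hinner H (hsub H a (proj e n a)) (e j) = C0.
Proof.
  intros HO Hj. rewrite inner_subl. unfold proj. rewrite inner_lincombl.
  rewrite (csum_single n _ j Hj).
  2:{ intros k Hk D. rewrite (ON_pair e n j k); auto. apply Cext; simpl; ring. }
  destruct HO as [_ O2]. destruct (O2 j Hj) as [E|E].
  - rewrite E, inner_0r. apply Cext; simpl; ring.
  - rewrite E. apply Cext; simpl; ring.
Qed.

Lemma gs_ON v n : ON (gse v) n.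
Proof.
  induction n.
  - split; intros; lia.
  - destruct IHn as [O1 O2]. split.
    + intros j k Hjk Hk. destruct (Nat.eq_dec k n).
      * subst. rewrite gse_def. apply normalize_orth. apply proj_orth; auto. split; auto.
      * apply O1; lia.
    + intros k Hk. destruct (Nat.eq_dec k n).
      * subst. rewrite gse_def. apply normalize_cases.
      * apply O2; lia.
Qed.

Lemma gs_span v K r : (forall k, (k < K)%nat -> hinner H (gse v k) r = C0) ->
  forall m, (m < K)%nat -> hinner H (v m) r = C0.
Proof.
  intros Hr m Hm.
  set (rho := hsub H (v m) (proj (gse v) m (v m))).
  assert (E : v m = hadd H (proj (gse v) m (v m)) rho) by (symmetry; apply hadd_sub).
  rewrite E, hinner_addl. unfold proj. rewrite inner_lincombl.
  rewrite csum_zero. 2:{ intros. rewrite Hr by lia. apply Cext; simpl; ring. }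
  rewrite (normalize_recon rho), hinner_scall. unfold rho at 2. rewrite <- gse_def, Hr by auto.
  apply Cext; simpl; ring.
Qed.

Lemma ON_norm e n k : ON e n -> (k < n)%nat -> nsq (e k) <= 1.
Proof.
  intros [_ O2] Hk. destruct (O2 k Hk) as [E|E]; unfold nsq; rewrite E.
  rewrite inner_0l; simpl; lra. simpl; lra.
Qed.

Lemma ON_hnorm e n k : ON e n -> (k < n)%nat -> hnorm H (e k) <= 1.
Proof. intros. apply (ON_norm e n k) in H1; auto. apply H1_le in H1. exact H1. Qed.

Lemma coef_bound e n a k : ON e n -> (k < n)%nat -> Cmod (hinner H a (e k)) <= hnorm H a.
Proof.
  intros. eapply Rle_trans. apply CS. pose proof (ON_hnorm e n k H0 H1).
  pose proof (hnorm_pos a). pose proof (hnorm_pos (e k)). nra.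
Qed.

Lemma orth_proj e n r b : (forall k, (k < n)%nat -> hinner H r (e k) = C0) ->
  hinner H r (proj e n b) = C0.
Proof.
  intros Hr. unfold proj. rewrite inner_lincombr. apply csum_zero. intros.
  rewrite Hr by auto. apply Cext; simpl; ring.
Qed.

Lemma proj_pyth e n a : ON e n ->
  nsq a = nsq (proj e n a) + nsq (hsub H a (proj e n a)).
Proof.
  intros HO. set (p := proj e n a). set (r := hsub H a p).
  assert (E : a = hadd H p r) by (symmetry; apply hadd_sub).
  assert (R1 : hinner H r p = C0).
  { apply orth_proj. intros; apply proj_orth; auto. }
  assert (R2 : hinner H p r = C0) by (apply inner_sym0; auto).
  assert (F : hinner H a a = hinner H (hadd H p r) (hadd H p r)) by (rewrite <- E; auto).
  unfold nsq. rewrite F, inner_add_add, R1, R2. simpl. ring.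
Qed.

Lemma proj_le e n a : ON e n -> nsq (proj e n a) <= nsq a.
Proof. intros. pose proof (proj_pyth e n a H0). pose proof (nsq_pos (hsub H a (proj e n a))). lra. Qed.

Lemma res_le e n a : ON e n -> nsq (hsub H a (proj e n a)) <= nsq a.
Proof. intros. pose proof (proj_pyth e n a H0). pose proof (nsq_pos (proj e n a)). lra. Qed.

Lemma res_inner e n a : ON e n ->
  hinner H (hsub H a (proj e n a)) a = hinner H (hsub H a (proj e n a)) (hsub H a (proj e n a)).
Proof.
  intros HO. set (p := proj e n a). set (r := hsub H a p).
  assert (E : a = hadd H p r) by (symmetry; apply hadd_sub).
  assert (R1 : hinner H r p = C0).
  { apply orth_proj. intros; apply proj_orth; auto. }
  assert (F : hinner H r a = hinner H r (hadd H p r)) by (rewrite <- E; auto).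
  rewrite F, inner_addr, R1. apply Cext; simpl; ring.
Qed.

End G.


Lemma idx_div j k M : (k < M)%nat -> ((j * M + k) / M = j)%nat.
Proof. intros. symmetry. apply (Nat.div_unique _ _ _ k); lia. Qed.
Lemma idx_mod j k M : (k < M)%nat -> ((j * M + k) mod M = k)%nat.
Proof. intros. symmetry. apply (Nat.mod_unique _ _ j); lia. Qed.

Lemma csum_mul_sub n c f g :
  Cadd (csum n (fun k => Cmul (c k) (f k))) (Copp (csum n (fun k => Cmul (c k) (g k)))) =
  csum n (fun k => Cmul (c k) (Cadd (f k) (Copp (g k)))).
Proof.
  induction n; simpl. apply Cext; simpl; ring.
  rewrite <- IHn. apply Cext; simpl; ring.
Qed.

Section U.
Context {H : HilbertSpace}.

Lemma adj_iso (U S : H -> H) : unitary H U -> is_adjoint H U S ->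
  forall y, nsq (S y) = nsq y.
Proof.
  intros [_ [S' [Had [HSU HUS]]]] HS y.
  assert (ES : S y = S' y).
  { apply hsub_eq, nsq0. unfold nsq. rewrite inner_subr, <- HS, <- Had.
    simpl. ring. }
  unfold nsq. rewrite <- HS, ES, HUS. auto.
Qed.

Lemma shift (U S : H -> H) p q z : is_adjoint H U S ->
  hinner H (hsub H (U p) (U q)) z = hinner H (hsub H p q) (S z).
Proof. intros HS. rewrite !inner_subl, !HS. auto. Qed.

Lemma Cmod_real r : 0 <= r -> Cmod (mkC r 0) = r.
Proof. intros. unfold Cmod; simpl. replace (r * r + 0 * 0) with (r * r) by ring. apply sqrt_square; auto. Qed.

Lemma in_B1_zero : in_B1 H (fun _ => hzero H).
Proof.
  split. split. intros; symmetry; apply hadd_zero. intros; symmetry; apply hscal_0v.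
  intros. rewrite hnorm_zero. apply hnorm_pos.
Qed.

Lemma in_B1_rank1 (r : H) : nsq r <= 1 -> in_B1 H (fun x => hscal H (hinner H x r) r).
Proof.
  intros Hr. split. split.
  - intros. rewrite hinner_addl. apply hscal_adds.
  - intros. rewrite hinner_scall. symmetry; apply hscal_assoc.
  - intros x. rewrite hnorm_scal. pose proof (CS x r).
    assert (hnorm H r <= 1) by (apply H1_le; auto).
    pose proof (hnorm_pos r). pose proof (hnorm_pos x). pose proof (Cmod_nonneg (hinner H x r)).
    nra.
Qed.

Lemma hnorm_lt_of_nsq x e : 0 < e -> nsq x < e * e -> hnorm H x < e.
Proof.
  intros. pose proof (hnorm_sq x). pose proof (hnorm_pos x).
  destruct (Rlt_or_le (hnorm H x) e); auto. nra.
Qed.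

Lemma hnorm_le1 x : nsq x <= 1 -> hnorm H x <= 1.
Proof. intros. apply H1_le; auto. Qed.

End U.


Lemma dir1 (H : HilbertSpace) (u ustar : R -> H -> H) :
  (forall t, unitary H (u t)) -> (forall t, is_adjoint H (u t) (ustar t)) ->
  UEC_H1 H u -> UEC_B1 H (fun t (A : H -> H) (x : H) => u t (A (ustar t x))).
Proof.
  intros Hun Hadj Hu N w z eps Hwz Heps.
  set (eps1 := (eps/8) * (eps/8)).
  assert (He1 : 0 < eps1) by (unfold eps1; nra).
  set (g := fun i => if Nat.ltb i N then z i else w (i - N)%nat).
  assert (Hg : forall i, (i < N + N)%nat -> in_H1 H (g i)).
  { intros i Hi. unfold g. destruct (Nat.ltb_spec i N). apply Hwz; auto. apply Hwz; lia. }
  destruct (Hu (N + N)%nat g eps1 Hg He1) as [M [v [del1 [Hv [Hdel1 Hent]]]]].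
  set (e := gse v).
  assert (HO : ON e M) by apply gs_ON.
  assert (Sn : forall t y, in_H1 H y -> nsq (ustar t y) <= 1).
  { intros t y Hy. rewrite (adj_iso (u t) (ustar t) (Hun t) (Hadj t)). apply H1_le; auto. }
  assert (R : forall t i, (i < N + N)%nat ->
     hnorm H (hsub H (ustar t (g i)) (proj e M (ustar t (g i)))) < eps / 8).
  { intros t i Hi. set (a := ustar t (g i)). set (r := hsub H a (proj e M a)).
    apply hnorm_lt_of_nsq. lra. fold eps1.
    assert (Ha : nsq a <= 1) by (apply Sn; auto).
    assert (Hr : in_H1 H r) by (apply H1_le; eapply Rle_trans; [apply res_le; auto| auto]).
    assert (W : weak_ent H M v del1 r (hzero H)).
    { intros m Hm. rewrite inner_sub0.
      rewrite (inner_sym0 _ _ (gs_span v M r (fun k Hk => inner_sym0 _ _ (proj_orth e M a k HO Hk)) m Hm)).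
      rewrite Cmod_C0. auto. }
    specialize (Hent r (hzero H) Hr in_H1_zero W t i Hi).
    rewrite (shift _ _ _ _ _ (Hadj t)), inner_sub0 in Hent. fold a in Hent.
    unfold r in Hent. rewrite res_inner in Hent by auto. fold r in Hent.
    pose proof (Re_le_Cmod (hinner H r r)). unfold nsq. lra. }
  set (del := eps / (4 * (INR M * INR M + 1))).
  assert (HM2 : 0 <= INR M * INR M) by (pose proof (pos_INR M); nra).
  assert (Hdel : 0 < del) by (unfold del; apply Rdiv_lt_0_compat; lra).
  exists (M * M)%nat, (fun i => e (i / M)%nat), (fun i => e (i mod M)%nat), del.
  split; [|split; auto].
  { intros i Hi. assert (M <> 0%nat) by (intro; subst; simpl in Hi; lia).
    split; apply hnorm_le1; apply (ON_norm e M); auto.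
    apply Nat.Div0.div_lt_upper_bound; lia. apply Nat.mod_upper_bound; auto. }
  intros A B HA HB Hent' t i Hi. cbv beta.
  rewrite (shift _ _ _ _ _ (Hadj t)).
  set (a := ustar t (w i)). set (b := ustar t (z i)).
  assert (Ga : a = ustar t (g (N + i)%nat)).
  { unfold a, g. destruct (Nat.ltb_spec (N + i) N). lia. f_equal. f_equal. lia. }
  assert (Gb : b = ustar t (g i)).
  { unfold b, g. destruct (Nat.ltb_spec i N). auto. lia. }
  assert (Ra : hnorm H (hsub H a (proj e M a)) < eps / 8) by (rewrite Ga; apply R; lia).
  assert (Rb : hnorm H (hsub H b (proj e M b)) < eps / 8) by (rewrite Gb; apply R; lia).
  assert (Na : nsq a <= 1) by (apply Sn; apply Hwz; auto).
  assert (Nb : nsq b <= 1) by (apply Sn; apply Hwz; auto).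
  set (pa := proj e M a). set (ra := hsub H a pa).
  set (pb := proj e M b). set (rb := hsub H b pb).
  fold pa ra in Ra. fold pb rb in Rb.
  assert (Ea : a = hadd H pa ra) by (symmetry; apply hadd_sub).
  assert (Eb : b = hadd H pb rb) by (symmetry; apply hadd_sub).
  destruct HA as [[LA1 LA2] NA]. destruct HB as [[LB1 LB2] NB].
  assert (DA : forall C : H -> H, (forall x y, C (hadd H x y) = hadd H (C x) (C y)) ->
     hinner H (C a) b = Cadd (Cadd (hinner H (C pa) pb) (hinner H (C pa) rb)) (hinner H (C ra) b)).
  { intros C LC. rewrite Ea at 1. rewrite LC, hinner_addl.
    rewrite Eb at 1. rewrite inner_addr. auto. }
  rewrite inner_subl, (DA A LA1), (DA B LB1).
  set (T1 := Cadd (hinner H (A pa) pb) (Copp (hinner H (B pa) pb))).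
  set (T2 := Cadd (hinner H (A pa) rb) (Copp (hinner H (B pa) rb))).
  set (T3 := Cadd (hinner H (A ra) b) (Copp (hinner H (B ra) b))).
  replace (Cadd _ _) with (Cadd (Cadd T1 T2) T3) by (apply Cext; simpl; ring).
  assert (Npa : hnorm H pa <= 1) by (apply hnorm_le1; eapply Rle_trans; [apply proj_le; auto|auto]).
  assert (Hb1 : hnorm H b <= 1) by (apply hnorm_le1; auto).
  assert (Ha1 : hnorm H a <= 1) by (apply hnorm_le1; auto).
  assert (B2 : Cmod T2 <= eps / 4).
  { unfold T2. eapply Rle_trans. apply Cmod_sub.
    pose proof (CS (A pa) rb). pose proof (CS (B pa) rb).
    pose proof (NA pa). pose proof (NB pa). pose proof (hnorm_pos rb).
    pose proof (hnorm_pos (A pa)). pose proof (hnorm_pos (B pa)). nra. }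
  assert (B3 : Cmod T3 <= eps / 4).
  { unfold T3. eapply Rle_trans. apply Cmod_sub.
    pose proof (CS (A ra) b). pose proof (CS (B ra) b).
    pose proof (NA ra). pose proof (NB ra). pose proof (hnorm_pos ra). pose proof (hnorm_pos b).
    pose proof (hnorm_pos (A ra)). pose proof (hnorm_pos (B ra)). nra. }
  assert (B1 : Cmod T1 <= INR M * (INR M * del)).
  { unfold T1, pa, proj.
    rewrite (linear_lincomb A) by (split; auto). rewrite (linear_lincomb B) by (split; auto).
    rewrite !inner_lincombl, csum_mul_sub.
    apply csum_bound. intros j Hj. rewrite Cmod_mul.
    unfold pb, proj. rewrite !inner_lincombr, csum_mul_sub.
    assert (Cmod (csum M (fun k => Cmul (Cconj (hinner H b (e k)))
        (Cadd (hinner H (A (e j)) (e k)) (Copp (hinner H (B (e j)) (e k)))))) <= INR M * del).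
    { apply csum_bound. intros k Hk. rewrite Cmod_mul, Cmod_conj.
      pose proof (coef_bound e M b k HO Hk).
      specialize (Hent' (j * M + k)%nat).
      cbv beta in Hent'. rewrite idx_div, idx_mod, inner_subl in Hent' by auto.
      assert (Cmod (Cadd (hinner H (A (e j)) (e k)) (Copp (hinner H (B (e j)) (e k)))) < del).
      { apply Hent'. nia. }
      pose proof (Cmod_nonneg (hinner H b (e k))).
      pose proof (Cmod_nonneg (Cadd (hinner H (A (e j)) (e k)) (Copp (hinner H (B (e j)) (e k))))).
      nra. }
    pose proof (coef_bound e M a j HO Hj). pose proof (Cmod_nonneg (hinner H a (e j))).
    pose proof (Cmod_nonneg (csum M (fun k => Cmul (Cconj (hinner H b (e k)))
        (Cadd (hinner H (A (e j)) (e k)) (Copp (hinner H (B (e j)) (e k))))))).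
    pose proof (pos_INR M). assert (0 <= INR M * del) by nra. nra. }
  assert (B1' : INR M * (INR M * del) < eps / 4).
  { unfold del. rewrite <- Rmult_assoc. apply (Rmult_lt_reg_r (4 * (INR M * INR M + 1))). lra.
    field_simplify. nra. lra. }
  eapply Rle_lt_trans. apply Cmod_add. pose proof (Cmod_add T1 T2). lra.
Qed.


Lemma dir2 (H : HilbertSpace) (u ustar : R -> H -> H) :
  (forall t, unitary H (u t)) -> (forall t, is_adjoint H (u t) (ustar t)) ->
  UEC_B1 H (fun t (A : H -> H) (x : H) => u t (A (ustar t x))) -> UEC_H1 H u.
Proof.
  intros Hun Hadj HB N z eps Hz Heps.
  set (q := eps / 4).
  assert (Hq : 0 < q) by (unfold q; lra).
  set (eps1 := (q * q) * (q * q)).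
  assert (He1 : 0 < eps1) by (unfold eps1; assert (0 < q * q) by nra; nra).
  assert (Hzz : forall i, (i < N)%nat -> in_H1 H (z i) /\ in_H1 H (z i)) by (intros; split; auto).
  destruct (HB N z z eps1 Hzz He1) as [M [w' [z' [del1 [Hwz' [Hdel1 Hent]]]]]].
  set (v := fun i => if Nat.ltb i M then w' i else z' (i - M)%nat).
  set (K := (M + M)%nat).
  set (e := gse v).
  assert (HO : ON e K) by apply gs_ON.
  assert (Sn : forall t y, in_H1 H y -> nsq (ustar t y) <= 1).
  { intros t y Hy. rewrite (adj_iso (u t) (ustar t) (Hun t) (Hadj t)). apply H1_le; auto. }
  assert (R : forall t i, (i < N)%nat ->
     hnorm H (hsub H (ustar t (z i)) (proj e K (ustar t (z i)))) < q).
  { intros t i Hi. set (a := ustar t (z i)). set (r := hsub H a (proj e K a)).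
    assert (Ha : nsq a <= 1) by (apply Sn; auto).
    assert (Hr : nsq r <= 1) by (eapply Rle_trans; [apply res_le; auto| auto]).
    assert (Orth : forall m, (m < K)%nat -> hinner H (v m) r = C0).
    { apply gs_span. intros k Hk. apply inner_sym0. apply proj_orth; auto. }
    set (D := fun x => hscal H (hinner H x r) r).
    assert (W : wot_ent H M w' z' del1 D (fun _ => hzero H)).
    { intros j Hj. rewrite inner_sub0. unfold D. rewrite hinner_scall.
      assert (E : hinner H r (z' j) = C0).
      { apply inner_sym0. specialize (Orth (M + j)%nat). unfold v in Orth.
        destruct (Nat.ltb_spec (M + j) M). lia.
        replace (M + j - M)%nat with j in Orth by lia. apply Orth. unfold K; lia. }
      rewrite E. replace (Cmul _ C0) with C0 by (apply Cext; simpl; ring).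
      rewrite Cmod_C0. auto. }
    specialize (Hent D (fun _ => hzero H) (in_B1_rank1 r Hr) in_B1_zero W t i Hi).
    cbv beta in Hent. rewrite (shift _ _ _ _ _ (Hadj t)), inner_sub0 in Hent. fold a in Hent.
    unfold D in Hent. rewrite hinner_scall, Cmod_mul in Hent.
    assert (E1 : hinner H r a = mkC (nsq r) 0).
    { unfold r. rewrite res_inner by auto. fold r. apply Cext; simpl; auto. apply Im_self. }
    assert (E2 : hinner H a r = mkC (nsq r) 0).
    { rewrite hinner_conj, E1. apply Cext; simpl; ring. }
    rewrite E1, E2, Cmod_real in Hent by apply nsq_pos.
    apply hnorm_lt_of_nsq. auto.
    pose proof (nsq_pos r). destruct (Rlt_or_le (nsq r) (q * q)); auto.
    unfold eps1 in Hent. assert (0 <= q * q) by nra. nra. }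
  set (del := eps / (2 * (INR K + 1))).
  assert (HK : 0 <= INR K) by apply pos_INR.
  assert (Hdel : 0 < del) by (unfold del; apply Rdiv_lt_0_compat; lra).
  exists K, e, del. split; [|split; auto].
  { intros k Hk. apply hnorm_le1. apply (ON_norm e K); auto. }
  intros x y Hx Hy Hent' t i Hi.
  rewrite (shift _ _ _ _ _ (Hadj t)).
  set (a := ustar t (z i)).
  assert (Ra := R t i Hi). fold a in Ra.
  set (pa := proj e K a). set (ra := hsub H a pa). fold pa ra in Ra.
  assert (Ea : a = hadd H pa ra) by (symmetry; apply hadd_sub).
  rewrite Ea, inner_addr.
  assert (Hx1 : hnorm H x <= 1) by auto.
  assert (Hy1 : hnorm H y <= 1) by auto.
  assert (B2 : Cmod (hinner H (hsub H x y) ra) <= eps / 2).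
  { rewrite inner_subl. eapply Rle_trans. apply Cmod_sub.
    pose proof (CS x ra). pose proof (CS y ra). pose proof (hnorm_pos ra).
    pose proof (hnorm_pos x). pose proof (hnorm_pos y). unfold q in Ra. nra. }
  assert (B1 : Cmod (hinner H (hsub H x y) pa) <= INR K * del).
  { unfold pa, proj. rewrite inner_lincombr. apply csum_bound. intros k Hk.
    rewrite Cmod_mul, Cmod_conj.
    pose proof (coef_bound e K a k HO Hk).
    assert (hnorm H a <= 1) by (apply hnorm_le1; apply Sn; auto).
    assert (Cmod (hinner H (hsub H x y) (e k)) < del) by (apply Hent'; auto).
    pose proof (Cmod_nonneg (hinner H a (e k))).
    pose proof (Cmod_nonneg (hinner H (hsub H x y) (e k))). nra. }
  assert (B1' : INR K * del < eps / 2).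
  { unfold del. apply (Rmult_lt_reg_r (2 * (INR K + 1))). lra.
    field_simplify. nra. lra. }
  eapply Rle_lt_trans. apply Cmod_add. lra.
Qed.


Theorem mainTheorem3 (H : HilbertSpace) :
  separable H -> infinite_dimensional H ->
  forall (u ustar : R -> H -> H),
    one_param_unitary_group H u ->
    (forall t, is_adjoint H (u t) (ustar t)) ->
    (UEC_H1 H u <->
     UEC_B1 H (fun t (A : H -> H) (x : H) => u t (A (ustar t x)))).
Proof.
  intros _ _ u ustar [Hun _] Hadj. split.
  - apply dir1; auto.
  - apply dir2; auto.
Qed.
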